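(* Let $\mathcal X$ be a compact set in a normed space (dual norm $\|\cdot\|_*$), and let $l_1,\dots,l_N$ and $v_1,\dots,v_N$ be differentiable functions on $\mathcal X$. Write $l_{1:n}=\sum_{m=1}^nl_m$ ($l_{1:0}\equiv0$). Suppose in each round $n$, $l_{1:n}$ is $\mu_{1:n}$-strongly convex for some $\mu_{1:n}>0$, $v_{n+1}$ is a (possibly nonconvex) function such that $l_{1:n}+v_{n+1}$ is convex (and $v_1$ convex), and the learner plays FTL with prediction: $x_{n}\in\operatorname{arg\,min}_{x\in\mathcal X}(l_{1:n-1}+v_n)(x)$. Then, with $x_n^\star\in\operatorname{arg\,min}_{x\in\mathcal X}l_{1:n}(x)$, $$\sum_{n=1}^N\big(l_{1:n}(x_n)-l_{1:n}(x_n^\star)\big)\le\sum_{n=1}^N\frac1{2\mu_{1:n}}\|\nabla l_n(x_n)-\nabla v_n(x_n)\|_*^2.$$ *)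

(* Defs.v *)
From HB Require Import structures.
From mathcomp Require Import all_boot all_order all_algebra.
From mathcomp Require Import all_classical all_reals all_analysis.
Set Implicit Arguments. Unset Strict Implicit. Unset Printing Implicit Defensive.
Import Order.TTheory GRing.Theory Num.Theory.
Import numFieldNormedType.Exports.
Local Open Scope classical_set_scope.
Local Open Scope ring_scope.

Section defs.
Context {R : realType} {V : normedModType R}.

Definition convex_subset (X : set V) : Prop :=
  forall a b (t : R), X a -> X b -> 0 <= t <= 1 -> X (t *: a + (1 - t) *: b).

Definition convex_on (X : set V) (f : V -> R) : Prop :=
  forall a b (t : R), X a -> X b -> 0 <= t <= 1 ->
    f (t *: a + (1 - t) *: b) <= t * f a + (1 - t) * f b.

Definition strongly_convex_on (X : set V) (mu : R) (f : V -> R) : Prop :=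
  forall a b (t : R), X a -> X b -> 0 <= t <= 1 ->
    f (t *: a + (1 - t) *: b)
      <= t * f a + (1 - t) * f b - mu / 2 * t * (1 - t) * `|a - b| ^+ 2.

Definition dual_norm (g : V -> R) : R :=
  sup [set `|g h| | h in [set h : V | `|h| <= 1]].

Definition is_argmin (X : set V) (f : V -> R) (x : V) : Prop :=
  X x /\ forall y, X y -> f x <= f y.

End defs.

Definition cumul {R : realType} {V : normedModType R}
  (l : nat -> V -> R) (n : nat) : V -> R :=
  fun x => \sum_(1 <= m < n.+1) l m x.

(* Main.v *)
Require Import Defs.
From HB Require Import structures.
From mathcomp Require Import all_boot all_order all_algebra.
From mathcomp Require Import all_classical all_reals all_analysis.
From mathcomp Require Import ring lra.
Import Order.TTheory GRing.Theory Num.Theory.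
Import numFieldNormedType.Exports.
Local Open Scope classical_set_scope.
Local Open Scope ring_scope.

Lemma lin_bound {R : realType} {V : normedModType R} (f : {linear V -> R}) :
  continuous f -> exists2 r : R, 0 < r & forall x, `|f x| <= r * `|x|.
Proof.
move=> cf.
have := continuous_linear_bounded 0 (cf 0).
by move=> /linear_boundedP /pinfty_ex_gt0.
Qed.

Lemma dual_bound {R : realType} {V : normedModType R} (f1 f2 : {linear V -> R}) :
  continuous f1 -> continuous f2 ->
  forall h, `|f1 h - f2 h| <= dual_norm (fun h => f1 h - f2 h) * `|h|.
Proof.
move=> c1 c2 h.
have [r1 r10 H1] := lin_bound _ c1.
have [r2 r20 H2] := lin_bound _ c2.
set S := [set `|f1 k - f2 k| | k in [set k : V | `|k| <= 1]].
have ub : has_ubound S.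
  exists (r1 + r2) => _ [k /= k1 <-].
  apply: (le_trans (ler_normB _ _)).
  apply: lerD.
    apply: (le_trans (H1 k)); by rewrite ler_piMr // ltW.
  apply: (le_trans (H2 k)); by rewrite ler_piMr // ltW.
have [->|h0] := eqVneq h 0.
  by rewrite normr0 mulr0 !linear0 addr0 normr0.
have hp : 0 < `|h| by rewrite normr_gt0.
have Sx : S (`|f1 (`|h|^-1 *: h) - f2 (`|h|^-1 *: h)|).
  exists (`|h|^-1 *: h) => //=.
  rewrite normrZ ger0_norm ?invr_ge0 ?normr_ge0 // mulVf ?gt_eqF //.
have := ub_le_sup ub Sx.
rewrite !linearZ /= -scalerDr normrZ ger0_norm ?invr_ge0 ?normr_ge0 // => H.
have := ler_wpM2r (normr_ge0 h) H.
by rewrite mulrC mulrA mulfV ?gt_eqF // mul1r.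
Qed.

Lemma key {R : realType} {V : normedModType R} (X : set V) (F L g1 g2 : V -> R)
  (z y : V) (mu d1 d2 D : R) :
  convex_subset X -> X z -> X y -> 0 < mu ->
  (forall w, X w -> F z <= F w) ->
  (forall w, L w = F w + (g1 w - g2 w)) ->
  strongly_convex_on X mu L ->
  (fun t : R => t^-1 *: ((g1 \o shift z) (t *: (y - z)) - g1 z)) @ 0^' --> d1 ->
  (fun t : R => t^-1 *: ((g2 \o shift z) (t *: (y - z)) - g2 z)) @ 0^' --> d2 ->
  `|d1 - d2| <= D * `|y - z| ->
  L z - L y <= (2*mu)^-1 * D ^+ 2.
Proof.
move=> cX Xz Xy mu0 Fmin LFg sc c1 c2 Gb.
set h := y - z.
have Hq : d1 - d2 <= L y - L z - mu / 2 * (1 - 0) * `|h| ^+ 2.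
  have c12 : (fun t : R => t^-1 *: ((g1 \o shift z) (t *: (y - z)) - g1 z)
     - t^-1 *: ((g2 \o shift z) (t *: (y - z)) - g2 z)) @ 0^'+ --> d1 - d2.
    by apply: cvg_dnbhs_at_right; apply: cvgB.
  have HH := @ler_cvg_to _ _ _ R _ (fun t : R => L y - L z - mu / 2 * (1 - t) * `|h| ^+ 2) _ (L y - L z - mu / 2 * (1 - 0) * `|h| ^+ 2) c12.
  apply: HH.
    apply: cvg_at_right_filter.
    apply: cvgB; first exact: cvg_cst.
    apply: cvgM; last exact: cvg_cst.
    apply: cvgM; first exact: cvg_cst.
    apply: cvgB; [exact: cvg_cst | exact: cvg_id].
  near=> t.
  have t0 : 0 < t by near: t; exact: nbhs_right_gt.
  have t1 : t <= 1 by near: t; apply: nbhs_right_le; exact: ltr01.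
  have ew : t *: y + (1 - t) *: z = t *: h + z.
    by rewrite /h scalerBr scalerBl scale1r addrA addrAC.
  have t01 : 0 <= t <= 1 by rewrite t1 ltW.
  have Xw : X (t *: h + z) by rewrite -ew; apply: cX.
  have := sc y z t Xy Xz t01; rewrite ew => scw.
  have := Fmin _ Xw.
  rewrite /= !LFg in scw *.
  move=> Fw.
  rewrite -scalerBr /=.
  rewrite -(ler_pM2l t0) mulrA mulfV ?gt_eqF // mul1r.
  set A := `|h|^+2 in scw *.
  rewrite -/h.
  have E2 : t * (F y + (g1 y - g2 y) - (F z + (g1 z - g2 z)) - mu / 2 * (1 - t) * A)
    = (t * (F y + (g1 y - g2 y)) + (1 - t) * (F z + (g1 z - g2 z)) -
    mu / 2 * t * (1 - t) * A) - (F z + (g1 z - g2 z)) by ring.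
  rewrite E2; lra.
rewrite subr0 mulr1 in Hq.
move: Gb; rewrite ler_norml -/h => /andP[Gl _].
have mu2 : 0 < 2 * mu by rewrite mulr_gt0.
have sq : 0 <= (2 * mu)^-1 * (D - mu * `|h|) ^+ 2.
  by rewrite mulr_ge0 // ?invr_ge0 ?sqr_ge0 // ltW.
have E : (2 * mu)^-1 * (D - mu * `|h|) ^+ 2 =
  (2 * mu)^-1 * D ^+ 2 - (D * `|h| - mu / 2 * `|h| ^+ 2).
  by field; rewrite gt_eqF.
lra.
Unshelve. all: by end_near.
Qed.


Lemma cumulS {R : realType} {V : normedModType R} (l : nat -> V -> R) n w :
  (0 < n)%N -> cumul l n w = cumul l n.-1 w + l n w.
Proof. by move=> n0; rewrite /cumul prednK // big_nat_recr. Qed.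

Theorem lemma16 (R : realType) (V : normedModType R) (X : set V) (N : nat)
  (l v : nat -> V -> R) (mu : nat -> R) (x xs : nat -> V) :
  compact X -> convex_subset X ->
  (forall n, (1 <= n <= N)%N -> forall y, X y ->
     differentiable (l n) y /\ differentiable (v n) y) ->
  (forall n, (1 <= n <= N)%N -> 0 < mu n /\ strongly_convex_on X (mu n) (cumul l n)) ->
  convex_on X (v 1%N) ->
  (forall n, (1 <= n < N)%N -> convex_on X (cumul l n \+ v n.+1)) ->
  (forall n, (1 <= n <= N)%N -> is_argmin X (cumul l n.-1 \+ v n) (x n)) ->
  (forall n, (1 <= n <= N)%N -> is_argmin X (cumul l n) (xs n)) ->
  \sum_(1 <= n < N.+1) (cumul l n (x n) - cumul l n (xs n))
    <= \sum_(1 <= n < N.+1)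
         (2 * mu n)^-1 * dual_norm (fun h => 'd (l n) (x n) h - 'd (v n) (x n) h) ^+ 2.
Proof.
move=> _ cX diffs muh _ _ xmin xsmin.
apply: ler_sum_nat => n /andP[n1 nN].
have H : (1 <= n <= N)%N by rewrite n1.
have [Xxn xm] := xmin n H.
have [Xys _] := xsmin n H.
have [dl dv] := diffs n H (x n) Xxn.
have [mu0 scn] := muh n H.
apply: (@key R V X (cumul l n.-1 \+ v n) (cumul l n) (l n) (v n) (x n) (xs n) (mu n)
   ('d (l n) (x n) (xs n - x n)) ('d (v n) (x n) (xs n - x n))
   _ cX Xxn Xys mu0 xm _ scn _ _ _).
- by move=> w; rewrite cumulS //=; ring.
- by rewrite -deriveE //; exact: diff_derivable.
- by rewrite -deriveE //; exact: diff_derivable.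
- by apply: dual_bound; exact: diff_continuous.
Qed.
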